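(* Let $X$ solve $dX_t=\mu_X(X_t;\theta)\,dt+\sigma_X(X_t;\theta)\,dW_t$ on $\mathcal{X}=(x_l,x_r)$ and let $Y_t=V(X_t)$, with structure $\mathcal{S}=(\theta,V)$ ($\theta$ the data-generating parameter). Assume: (a) $\mu_X(\cdot;\theta)$ and $\sigma_X^2(\cdot;\theta)>0$ are twice continuously differentiable; (b) the scale measure satisfies $S(x;\theta)\to-\infty$ as $x\to x_l$ and $S(x;\theta)\to+\infty$ as $x\to x_r$; (c) $V$ is strictly increasing and twice continuously differentiable with inverse $U=V^{-1}$; (d) the drift $\mu_Y$ and diffusion $\sigma_Y^2$ of $Y$ are nonparametrically identified from the discretely sampled process $\{Y_{i\Delta}\}$. Define, on $\bar{\mathcal{X}}=S(\mathcal{X};\theta)$, $$\sigma_{\bar X}^2(\bar x;\vartheta)=s^2(S^{-1}(\bar x;\vartheta);\vartheta)\,\sigma_X^2(S^{-1}(\bar x;\vartheta);\vartheta).$$ Then $\mathcal{S}$ is identified if and only if the following holds: there exist no $\eta_1\neq1$, $\eta_2\neq0$ and $\tilde\theta\neq\theta$ such that $\sigma_{\bar X}^2(\bar x;\tilde\theta)=\sigma_{\bar X}^2(\eta_1\bar x+\eta_2;\theta)/\eta_1^2$ for all $\bar x\in\bar{\mathcal{X}}$.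
   Context: Scale density and scale measure: $s(x;\theta)=\exp\{-\int_{x^*}^x \frac{2\mu_X(z;\theta)}{\sigma_X^2(z;\theta)}dz\}$ and $S(x;\theta)=\int_{x^*}^x s(z;\theta)dz$ for some fixed $x^*\in\mathcal{X}$. For a structure $\mathcal{S}=(\theta,V)$ with $U=V^{-1}$, the drift and diffusion of $Y$ are $\mu_Y(y;\mathcal{S})=\frac{\mu_X(U(y);\theta)}{U'(y)}-\frac12\sigma_X^2(U(y);\theta)\frac{U''(y)}{U'(y)^3}$ and $\sigma_Y(y;\mathcal{S})=\frac{\sigma_X(U(y);\theta)}{U'(y)}$. Two structures are observationally equivalent ($\mathcal{S}\sim\tilde{\mathcal{S}}$) if they yield identical $\mu_Y(\cdot)$ and $\sigma_Y(\cdot)$ on the domain of $Y$. $\mathcal{S}$ is identified (within the model of admissible structures) if $\mathcal{S}\sim\tilde{\mathcal{S}}$ implies $\mathcal{S}=\tilde{\mathcal{S}}$. *)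

(* Defs.v *)
From Stdlib Require Import Reals ClassicalEpsilon.
From Coquelicot Require Import Coquelicot.
Open Scope R_scope.

Definition in_dom (xl xr : Rbar) (x : R) : Prop := Rbar_lt xl x /\ Rbar_lt x xr.

(* Filters "x -> x_l" and "x -> x_r" from inside 𝒳. *)
Definition left_end (xl : Rbar) : (R -> Prop) -> Prop :=
  match xl with
  | Finite a => at_right a
  | m_infty => Rbar_locally m_infty
  | p_infty => Rbar_locally p_infty
  end.
Definition right_end (xr : Rbar) : (R -> Prop) -> Prop :=
  match xr with
  | Finite b => at_left b
  | m_infty => Rbar_locally m_infty
  | p_infty => Rbar_locally p_infty
  end.

Definition C2_on (D : R -> Prop) (f : R -> R) : Prop :=
  forall x, D x ->
    ex_derive f x /\ ex_derive (Derive f) x /\ continuous (Derive (Derive f)) x.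

(* Inverse of f restricted to D (meaningful on f(D) when f is injective on D). *)
Definition inv_on (D : R -> Prop) (f : R -> R) (y : R) : R :=
  match excluded_middle_informative (exists x, D x /\ f x = y) with
  | left H => proj1_sig (constructive_indefinite_description _ H)
  | right _ => 0
  end.

Section Model.
Context {Th : Type}.
(* mu th x = μ_X(x;th), sig2 th x = σ_X^2(x;th); σ_X := sqrt σ_X^2 > 0 *)
Variables (mu sig2 : Th -> R -> R) (xl xr : Rbar) (xs : R).

(* scale density s(x;th) and scale measure S(x;th), base point x* = xs *)
Definition scale_dens (th : Th) (x : R) : R :=
  exp (- RInt (fun z => 2 * mu th z / sig2 th z) xs x).
Definition scale_meas (th : Th) (x : R) : R :=
  RInt (fun z => scale_dens th z) xs x.

Definition adm_param (th : Th) : Prop :=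
  C2_on (in_dom xl xr) (mu th) /\
  C2_on (in_dom xl xr) (sig2 th) /\
  (forall x, in_dom xl xr x -> 0 < sig2 th x) /\
  filterlim (scale_meas th) (left_end xl) (Rbar_locally m_infty) /\
  filterlim (scale_meas th) (right_end xr) (Rbar_locally p_infty).

(* assumption (c) on the transformation V (with V' > 0 so that U = V^{-1} is C^2) *)
Definition adm_transf (V : R -> R) : Prop :=
  (forall x y, in_dom xl xr x -> in_dom xl xr y -> x < y -> V x < V y) /\
  C2_on (in_dom xl xr) V /\
  (forall x, in_dom xl xr x -> 0 < Derive V x).

Definition Ydom (V : R -> R) (y : R) : Prop := exists x, in_dom xl xr x /\ V x = y.

Definition Uof (V : R -> R) : R -> R := inv_on (in_dom xl xr) V.

Definition muY (th : Th) (V : R -> R) (y : R) : R :=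
  let U := Uof V in
  mu th (U y) / Derive U y
  - / 2 * sig2 th (U y) * Derive (Derive U) y / (Derive U y) ^ 3.

Definition sigY (th : Th) (V : R -> R) (y : R) : R :=
  let U := Uof V in sqrt (sig2 th (U y)) / Derive U y.

Definition obs_equiv (th : Th) (V : R -> R) (th' : Th) (V' : R -> R) : Prop :=
  (forall y, Ydom V y <-> Ydom V' y) /\
  (forall y, Ydom V y -> muY th V y = muY th' V' y /\ sigY th V y = sigY th' V' y).

(* identification within the model of admissible structures;
   equality of structures = same parameter and same V on 𝒳 *)
Definition identified (th : Th) (V : R -> R) : Prop :=
  forall th' V', adm_param th' -> adm_transf V' -> obs_equiv th V th' V' ->
    th' = th /\ (forall x, in_dom xl xr x -> V' x = V x).

Definition sigXbar2 (th : Th) (xb : R) : R :=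
  let x := inv_on (in_dom xl xr) (scale_meas th) xb in
  (scale_dens th x) ^ 2 * sig2 th x.

End Model.

(* Main.v *)
Require Import Defs.
From Stdlib Require Import Reals ClassicalEpsilon Classical Lra Ranalysis5.
From Coquelicot Require Import Coquelicot.
Open Scope R_scope.
Ltac req := match goal with |- ?a = ?b => change (@eq R a b) end.

Lemma dom_interval xl xr a b c : in_dom xl xr a -> in_dom xl xr b -> a <= c <= b -> in_dom xl xr c.
Proof.
  unfold in_dom; intros [H1 H2] [H3 H4] H5.
  destruct xl, xr; simpl in *; try tauto; lra.
Qed.

Lemma dom_open xl xr x : in_dom xl xr x -> locally x (in_dom xl xr).
Proof.
  intros H. apply (open_and (T:=R_UniformSpace) (fun u : R => Rbar_lt xl u) (fun u : R => Rbar_lt u xr)).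
  apply open_Rbar_gt. apply open_Rbar_lt. exact H.
Qed.

Lemma locally_ball_sub (P : R -> Prop) x : locally x P -> exists d, 0 < d /\ forall z, Rabs (z - x) < d -> P z.
Proof.
  intros [e He]. exists e. split. apply cond_pos. intros z Hz. apply He. exact Hz.
Qed.

Lemma dom_ball xl xr x : in_dom xl xr x -> exists d, 0 < d /\ forall z, Rabs (z - x) < d -> in_dom xl xr z.
Proof. intros H; apply locally_ball_sub, dom_open, H. Qed.

Lemma cont_pt_of_cont f x : continuous f x -> continuity_pt f x.
Proof. intros H. apply continuity_pt_filterlim. exact H. Qed.

Lemma derive_cont (f : R -> R) (x l : R) : is_derive f x l -> continuous f x.
Proof. intros H. apply (ex_derive_continuous (K:=R_AbsRing) (V:=R_NormedModule)). exists l. exact H. Qed.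

Lemma zero_deriv_const (W : R -> Prop) f :
  (forall a b c, W a -> W b -> a <= c <= b -> W c) ->
  (forall z, W z -> is_derive f z 0) ->
  forall a b, W a -> W b -> f a = f b.
Proof.
  intros Hint Hd a b Ha Hb.
  assert (Hm : forall c, Rmin a b <= c <= Rmax a b -> W c).
  { intros c Hc. destruct (Rle_dec a b).
    - rewrite Rmin_left in Hc by lra. rewrite Rmax_right in Hc by lra. eauto.
    - rewrite Rmin_right in Hc by lra. rewrite Rmax_left in Hc by lra. eauto. }
  destruct (MVT_gen f a b (fun _ => 0)) as [c [_ Hc]].
  - intros x Hx. apply Hd, Hm. lra.
  - intros x Hx. apply cont_pt_of_cont. apply (derive_cont f x 0). apply Hd, Hm. lra.
  - lra.
Qed.


Lemma ivt_seg (f : R -> R) a b z : a <= b ->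
  (forall t, a <= t <= b -> continuous f t) -> f a <= z <= f b ->
  exists w, a <= w <= b /\ f w = z.
Proof.
  intros Hab Hc Hz.
  destruct (Req_dec (f a) z) as [E|E]. { exists a; split; [lra|exact E]. }
  destruct (Req_dec (f b) z) as [E'|E']. { exists b; split; [lra|exact E']. }
  assert (Hab' : a < b). { destruct (Req_dec a b); [subst; lra|lra]. }
  destruct (Ranalysis5.IVT_interv (fun t => f t - z) a b) as [w [Hw1 Hw2]].
  - intros t Ht. apply continuity_pt_minus. apply cont_pt_of_cont, Hc, Ht.
    apply continuity_pt_const. intros u v; reflexivity.
  - exact Hab'.
  - lra.
  - lra.
  - exists w; split; [exact Hw1|lra].
Qed.

Definition incr_on (D : R -> Prop) (f : R -> R) := forall x y, D x -> D y -> x < y -> f x < f y.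

Lemma incr_inj D f x y : incr_on D f -> D x -> D y -> f x = f y -> x = y.
Proof.
  intros H Hx Hy E. destruct (Rtotal_order x y) as [h|[h|h]]; auto.
  - specialize (H x y Hx Hy h); lra.
  - specialize (H y x Hy Hx h); lra.
Qed.

Lemma inv_on_f D f x : incr_on D f -> D x -> inv_on D f (f x) = x.
Proof.
  intros Hi Hx. unfold inv_on.
  destruct (excluded_middle_informative _) as [H|H].
  - destruct (constructive_indefinite_description _ H) as [x0 [H0 E]]; simpl.
    exact (incr_inj D f x0 x Hi H0 Hx E).
  - exfalso; apply H; exists x; auto.
Qed.

Lemma inv_on_spec D f y : (exists x, D x /\ f x = y) -> D (inv_on D f y) /\ f (inv_on D f y) = y.
Proof.
  intros H. unfold inv_on.
  destruct (excluded_middle_informative _) as [H'|H'].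
  - destruct (constructive_indefinite_description _ H') as [x0 [H0 E]]; simpl. auto.
  - contradiction.
Qed.

Lemma Rabs_lt_iff u v e : Rabs (u - v) < e <-> v - e < u < v + e.
Proof. split. intros H; apply Rabs_def2 in H; lra. intros H; apply Rabs_def1; lra. Qed.

Lemma Rabs_le_iff u v e : Rabs (u - v) <= e <-> v - e <= u <= v + e.
Proof. split. intros H. unfold Rabs in H; destruct (Rcase_abs _); lra.
  intros H; apply Rabs_le; lra. Qed.

Lemma inv_local xl xr (f : R -> R) x e :
  incr_on (in_dom xl xr) f ->
  (forall t, in_dom xl xr t -> continuous f t) ->
  in_dom xl xr x -> 0 < e -> (forall z, Rabs (z - x) <= e -> in_dom xl xr z) ->
  exists eta, 0 < eta /\ forall z, Rabs (z - f x) < eta ->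
     exists w, Rabs (w - x) <= e /\ in_dom xl xr w /\ f w = z.
Proof.
  intros Hi Hc Hx He Hb.
  assert (D1 : in_dom xl xr (x - e)) by (apply Hb; apply Rabs_le_iff; lra).
  assert (D2 : in_dom xl xr (x + e)) by (apply Hb; apply Rabs_le_iff; lra).
  assert (F1 : f (x - e) < f x) by (apply Hi; auto; lra).
  assert (F2 : f x < f (x + e)) by (apply Hi; auto; lra).
  exists (Rmin (f x - f (x - e)) (f (x + e) - f x)). split.
  { apply Rmin_case; lra. }
  intros z Hz. apply Rabs_lt_iff in Hz.
  assert (Hz1 := Rmin_l (f x - f (x - e)) (f (x + e) - f x)).
  assert (Hz2 := Rmin_r (f x - f (x - e)) (f (x + e) - f x)).
  destruct (ivt_seg f (x - e) (x + e) z) as [w [Hw E]].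
  - lra.
  - intros t Ht. apply Hc, Hb, Rabs_le_iff; lra.
  - lra.
  - exists w. split. apply Rabs_le_iff; lra. split; auto. apply Hb, Rabs_le_iff; lra.
Qed.

Definition rng (D : R -> Prop) (f : R -> R) (y : R) := exists x, D x /\ f x = y.

Lemma rng_open xl xr f y :
  incr_on (in_dom xl xr) f ->
  (forall t, in_dom xl xr t -> continuous f t) ->
  rng (in_dom xl xr) f y -> locally y (rng (in_dom xl xr) f).
Proof.
  intros Hi Hc [x [Hx E]]. subst y.
  destruct (dom_ball xl xr x Hx) as [d [Hd Hb]].
  destruct (inv_local xl xr f x (d/2) Hi Hc Hx) as [eta [Heta H]].
  lra. intros z Hz; apply Hb; lra.
  exists (mkposreal eta Heta). intros z Hz. simpl in Hz.
  destruct (H z) as [w [_ [Hw E]]]. exact Hz. exists w; auto.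
Qed.

Lemma inv_cont xl xr f y :
  incr_on (in_dom xl xr) f ->
  (forall t, in_dom xl xr t -> continuous f t) ->
  rng (in_dom xl xr) f y -> continuous (inv_on (in_dom xl xr) f) y.
Proof.
  intros Hi Hc [x [Hx E]]. subst y.
  apply filterlim_locally. intros eps.
  destruct (dom_ball xl xr x Hx) as [d [Hd Hb]].
  destruct (inv_local xl xr f x (Rmin (d/2) (eps/2)) Hi Hc Hx) as [eta [Heta H]].
  apply Rmin_case; [lra| destruct eps; simpl; lra].
  intros z Hz; apply Hb. assert (Rmin (d/2) (eps/2) <= d/2) by apply Rmin_l. lra.
  exists (mkposreal eta Heta). intros z Hz. simpl in Hz.
  destruct (H z Hz) as [w [Hw1 [Hw E]]]. subst z.
  rewrite (inv_on_f _ f w Hi Hw), (inv_on_f _ f x Hi Hx).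
  change (Rabs (w - x) < eps).
  assert (Rmin (d/2) (eps/2) <= eps/2) by apply Rmin_r. destruct eps; simpl in *; lra.
Qed.


Lemma C2_cont D f t : C2_on D f -> D t -> continuous f t.
Proof. intros H Ht. destruct (H t Ht) as [[l Hl] _]. exact (derive_cont f t l Hl). Qed.

Lemma C2_is_derive D f t : C2_on D f -> D t -> is_derive f t (Derive f t).
Proof. intros H Ht. apply Derive_correct. apply (H t Ht). Qed.

Lemma C2_is_derive2 D f t : C2_on D f -> D t -> is_derive (Derive f) t (Derive (Derive f) t).
Proof. intros H Ht. apply Derive_correct. apply (H t Ht). Qed.

Lemma inv_deriv xl xr f y :
  incr_on (in_dom xl xr) f -> C2_on (in_dom xl xr) f ->
  (forall t, in_dom xl xr t -> 0 < Derive f t) ->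
  rng (in_dom xl xr) f y ->
  is_derive (inv_on (in_dom xl xr) f) y (1 / Derive f (inv_on (in_dom xl xr) f y)).
Proof.
  intros Hi HC Hp Hy.
  set (D := in_dom xl xr) in *. set (U := inv_on D f).
  assert (Hc : forall t, D t -> continuous f t) by (intros; eapply C2_cont; eauto).
  destruct Hy as [x [Hx E]]. subst y.
  destruct (dom_ball xl xr x Hx) as [d [Hd Hb]].
  set (e := d/2).
  assert (Hb' : forall z, x - e <= z <= x + e -> D z).
  { intros z Hz; apply Hb. apply Rabs_lt_iff. unfold e in *; lra. }
  assert (D1 : D (x - e)) by (apply Hb'; unfold e in *; lra).
  assert (D2 : D (x + e)) by (apply Hb'; unfold e in *; lra).
  assert (F1 : f (x - e) < f x) by (apply Hi; auto; unfold e in *; lra).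
  assert (F2 : f x < f (x + e)) by (apply Hi; auto; unfold e in *; lra).
  assert (Ul : U (f (x - e)) = x - e) by (apply inv_on_f; auto).
  assert (Uu : U (f (x + e)) = x + e) by (apply inv_on_f; auto).
  assert (Ux : U (f x) = x) by (apply inv_on_f; auto).
  assert (Prf : forall a, U (f (x - e)) <= a <= U (f (x + e)) -> derivable_pt f a).
  { intros a Ha. rewrite Ul, Uu in Ha. apply ex_derive_Reals_0. apply (HC a (Hb' a Ha)). }
  assert (Prg : continuity_pt U (f x)).
  { apply cont_pt_of_cont. apply inv_cont. exact Hi. exact Hc. exists x; auto. }
  assert (Pin : U (f (x - e)) <= U (f x) <= U (f (x + e))).
  { rewrite Ul, Uu, Ux. unfold e in *; lra. }
  assert (F12 : f (x - e) < f (x + e)) by lra.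
  assert (Hid : forall z, f (x - e) <= z <= f (x + e) -> comp f U z = id z).
  { intros z Hz. unfold comp, id.
    destruct (ivt_seg f (x - e) (x + e) z) as [w [Hw Ew]].
    unfold e in *; lra. intros t Ht; apply Hc, Hb'; exact Ht. exact Hz.
    subst z. unfold U. rewrite inv_on_f; auto. }
  assert (Hnz : derive_pt f (U (f x)) (Prf (U (f x)) Pin) <> 0).
  { rewrite Derive_Reals, Ux. specialize (Hp x Hx). lra. }
  assert (H := derivable_pt_lim_recip_interv f U (f (x - e)) (f (x + e)) (f x) Prf Prg F12 (conj F1 F2) Pin Hid Hnz).
  rewrite Derive_Reals in H. apply is_derive_Reals. exact H.
Qed.

Lemma is_derive_eq (f : R -> R) x l l' : is_derive f x l -> l = l' -> is_derive f x l'.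
Proof. intros H <-; exact H. Qed.

Lemma cont_of_cont_pt f x : continuity_pt f x -> continuous f x.
Proof. intros H. apply continuity_pt_filterlim. exact H. Qed.

Lemma inv_deriv_loc xl xr f y :
  incr_on (in_dom xl xr) f -> C2_on (in_dom xl xr) f ->
  (forall t, in_dom xl xr t -> 0 < Derive f t) ->
  rng (in_dom xl xr) f y ->
  locally y (fun z => / Derive f (inv_on (in_dom xl xr) f z) = Derive (inv_on (in_dom xl xr) f) z).
Proof.
  intros Hi HC Hp Hy.
  assert (Hc : forall t, in_dom xl xr t -> continuous f t) by (intros; eapply C2_cont; eauto).
  apply (filter_imp (rng (in_dom xl xr) f)).
  - intros z Hz. rewrite (is_derive_unique _ _ _ (inv_deriv xl xr f z Hi HC Hp Hz)). unfold Rdiv; ring.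
  - apply rng_open; auto.
Qed.

Lemma inv_deriv2 xl xr f y :
  incr_on (in_dom xl xr) f -> C2_on (in_dom xl xr) f ->
  (forall t, in_dom xl xr t -> 0 < Derive f t) ->
  rng (in_dom xl xr) f y ->
  is_derive (Derive (inv_on (in_dom xl xr) f)) y
    (- Derive (Derive f) (inv_on (in_dom xl xr) f y) / (Derive f (inv_on (in_dom xl xr) f y)) ^ 3).
Proof.
  intros Hi HC Hp Hy.
  set (U := inv_on (in_dom xl xr) f).
  assert (HU := inv_on_spec _ _ _ Hy). fold U in HU. destruct HU as [HUd HUe].
  apply (is_derive_ext_loc (fun z => / Derive f (U z))).
  apply (inv_deriv_loc xl xr f y Hi HC Hp Hy).
  assert (Hd1 := inv_deriv xl xr f y Hi HC Hp Hy). fold U in Hd1.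
  assert (Hd2 := C2_is_derive2 _ f (U y) HC HUd).
  assert (Hc := is_derive_comp (Derive f) U y _ _ Hd2 Hd1).
  assert (Hpos := Hp _ HUd).
  eapply is_derive_eq. apply (is_derive_inv (fun z => Derive f (U z))). exact Hc. simpl; lra.
  simpl. unfold scal; simpl; unfold mult; simpl. field. lra.
Qed.

Lemma inv_C2 xl xr f :
  incr_on (in_dom xl xr) f -> C2_on (in_dom xl xr) f ->
  (forall t, in_dom xl xr t -> 0 < Derive f t) ->
  C2_on (rng (in_dom xl xr) f) (inv_on (in_dom xl xr) f).
Proof.
  intros Hi HC Hp y Hy.
  set (U := inv_on (in_dom xl xr) f).
  assert (Hc : forall t, in_dom xl xr t -> continuous f t) by (intros; eapply C2_cont; eauto).
  split. eexists; apply inv_deriv; auto.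
  split. eexists; apply inv_deriv2; auto.
  apply (continuous_ext_loc _ (fun z => - Derive (Derive f) (U z) / (Derive f (U z)) ^ 3)).
  - apply (filter_imp (rng (in_dom xl xr) f)).
    + intros z Hz. symmetry. apply is_derive_unique. apply inv_deriv2; auto.
    + apply rng_open; auto.
  - assert (HU := inv_on_spec _ _ _ Hy). fold U in HU. destruct HU as [HUd HUe].
    assert (HcU : continuity_pt U y) by (apply cont_pt_of_cont, inv_cont; auto).
    assert (Hc2 : continuity_pt (Derive (Derive f)) (U y)) by (apply cont_pt_of_cont; apply (HC _ HUd)).
    assert (Hc1 : continuity_pt (Derive f) (U y)).
    { apply cont_pt_of_cont. apply (derive_cont _ _ _ (C2_is_derive2 _ f (U y) HC HUd)). }
    assert (Hpos := Hp _ HUd).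
    apply cont_of_cont_pt.
    apply continuity_pt_div.
    + apply continuity_pt_opp. apply (continuity_pt_comp U (Derive (Derive f))); auto.
    + apply (continuity_pt_comp (fun z => Derive f (U z)) (fun a => a ^ 3)).
      apply (continuity_pt_comp U (Derive f)); auto.
      apply derivable_continuous_pt. apply derivable_pt_pow.
    + apply pow_nonzero. lra.
Qed.


Lemma RInt_loc xl xr xs (g : R -> R) b :
  in_dom xl xr xs -> in_dom xl xr b ->
  (forall t, in_dom xl xr t -> continuous g t) ->
  is_derive (fun x => RInt g xs x) b (g b).
Proof.
  intros Hs Hb Hc. apply (is_derive_RInt g (fun x => RInt g xs x) xs b).
  - apply (filter_imp (in_dom xl xr)). 2: apply dom_open; auto.
    intros b0 Hb0. apply (RInt_correct (V:=R_CompleteNormedModule)). apply (ex_RInt_continuous (V:=R_CompleteNormedModule)).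
    intros z Hz. apply Hc. destruct (Rle_dec xs b0).
    + rewrite Rmin_left in Hz by lra. rewrite Rmax_right in Hz by lra.
      apply (dom_interval xl xr xs b0); auto.
    + rewrite Rmin_right in Hz by lra. rewrite Rmax_left in Hz by lra.
      apply (dom_interval xl xr b0 xs); auto.
  - apply Hc, Hb.
Qed.


Lemma a_cont {Th} (mu sig2 : Th -> R -> R) xl xr xs th t :
  adm_param mu sig2 xl xr xs th -> in_dom xl xr t ->
  continuous (fun z => 2 * mu th z / sig2 th z) t.
Proof.
  intros [Hm [Hs [Hp _]]] Ht.
  apply cont_of_cont_pt. apply continuity_pt_div.
  apply continuity_pt_mult. apply continuity_pt_const; intros u v; reflexivity.
  apply cont_pt_of_cont. eapply C2_cont; eauto.
  apply cont_pt_of_cont. eapply C2_cont; eauto.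
  specialize (Hp t Ht); lra.
Qed.

Lemma sd_deriv {Th} (mu sig2 : Th -> R -> R) xl xr xs th x :
  in_dom xl xr xs -> adm_param mu sig2 xl xr xs th -> in_dom xl xr x ->
  is_derive (scale_dens mu sig2 xs th) x
     (- (2 * mu th x / sig2 th x) * scale_dens mu sig2 xs th x).
Proof.
  intros Hxs Ha Hx. unfold scale_dens.
  set (a := fun z => 2 * mu th z / sig2 th z).
  assert (H1 := RInt_loc xl xr xs a x Hxs Hx (fun t Ht => a_cont mu sig2 xl xr xs th t Ha Ht)).
  assert (H2 := is_derive_opp _ _ _ H1).
  assert (H3 := is_derive_comp exp (fun x => opp (RInt a xs x)) x _ _ (is_derive_exp _) H2).
  exact H3.
Qed.

Lemma sd_pos {Th} (mu sig2 : Th -> R -> R) xs th x : 0 < scale_dens mu sig2 xs th x.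
Proof. apply exp_pos. Qed.

Lemma sd_cont {Th} (mu sig2 : Th -> R -> R) xl xr xs th x :
  in_dom xl xr xs -> adm_param mu sig2 xl xr xs th -> in_dom xl xr x ->
  continuous (scale_dens mu sig2 xs th) x.
Proof. intros; eapply derive_cont; apply (sd_deriv mu sig2 xl xr xs); eauto. Qed.

Lemma sm_deriv {Th} (mu sig2 : Th -> R -> R) xl xr xs th x :
  in_dom xl xr xs -> adm_param mu sig2 xl xr xs th -> in_dom xl xr x ->
  is_derive (scale_meas mu sig2 xs th) x (scale_dens mu sig2 xs th x).
Proof.
  intros Hxs Ha Hx. unfold scale_meas.
  apply (RInt_loc xl xr xs); auto. intros t Ht; apply (sd_cont mu sig2 xl xr xs); auto.
Qed.

Lemma sm_Derive {Th} (mu sig2 : Th -> R -> R) xl xr xs th x :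
  in_dom xl xr xs -> adm_param mu sig2 xl xr xs th -> in_dom xl xr x ->
  Derive (scale_meas mu sig2 xs th) x = scale_dens mu sig2 xs th x.
Proof. intros; apply is_derive_unique, (sm_deriv mu sig2 xl xr xs); auto. Qed.

Lemma sm_Derive_loc {Th} (mu sig2 : Th -> R -> R) xl xr xs th x :
  in_dom xl xr xs -> adm_param mu sig2 xl xr xs th -> in_dom xl xr x ->
  locally x (fun z => scale_dens mu sig2 xs th z = Derive (scale_meas mu sig2 xs th) z).
Proof.
  intros Hxs Ha Hx. apply (filter_imp (in_dom xl xr)). 2: apply dom_open; auto.
  intros z Hz. symmetry; apply (sm_Derive mu sig2 xl xr xs); auto.
Qed.

Lemma sm_C2 {Th} (mu sig2 : Th -> R -> R) xl xr xs th :
  in_dom xl xr xs -> adm_param mu sig2 xl xr xs th ->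
  C2_on (in_dom xl xr) (scale_meas mu sig2 xs th).
Proof.
  intros Hxs Ha x Hx. split. eexists; apply (sm_deriv mu sig2 xl xr xs); auto.
  split.
  - eexists. apply (is_derive_ext_loc (scale_dens mu sig2 xs th)).
    apply (sm_Derive_loc mu sig2 xl xr xs); auto.
    apply (sd_deriv mu sig2 xl xr xs); auto.
  - apply (continuous_ext_loc _ (fun z => - (2 * mu th z / sig2 th z) * scale_dens mu sig2 xs th z)).
    + apply (filter_imp (in_dom xl xr)). 2: apply dom_open; auto.
      intros z Hz. symmetry. apply is_derive_unique.
      apply (is_derive_ext_loc (scale_dens mu sig2 xs th)).
      apply (sm_Derive_loc mu sig2 xl xr xs); auto.
      apply (sd_deriv mu sig2 xl xr xs); auto.
    + apply cont_of_cont_pt. apply continuity_pt_mult.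
      apply continuity_pt_opp. apply cont_pt_of_cont. apply (a_cont mu sig2 xl xr xs); auto.
      apply cont_pt_of_cont. apply (sd_cont mu sig2 xl xr xs); auto.
Qed.

Lemma sm_Dpos {Th} (mu sig2 : Th -> R -> R) xl xr xs th :
  in_dom xl xr xs -> adm_param mu sig2 xl xr xs th ->
  forall x, in_dom xl xr x -> 0 < Derive (scale_meas mu sig2 xs th) x.
Proof. intros; rewrite (sm_Derive mu sig2 xl xr xs); auto. apply sd_pos. Qed.

Lemma sm_incr {Th} (mu sig2 : Th -> R -> R) xl xr xs th :
  in_dom xl xr xs -> adm_param mu sig2 xl xr xs th ->
  incr_on (in_dom xl xr) (scale_meas mu sig2 xs th).
Proof.
  intros Hxs Ha x y Hx Hy Hxy.
  destruct (MVT_cor2 (scale_meas mu sig2 xs th) (scale_dens mu sig2 xs th) x y Hxy) as [c [E Hc]].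
  - intros c Hc. apply is_derive_Reals. apply (sm_deriv mu sig2 xl xr xs); auto.
    apply (dom_interval xl xr x y); auto.
  - assert (0 < scale_dens mu sig2 xs th c) by apply sd_pos.
    assert (0 < scale_dens mu sig2 xs th c * (y - x)) by (apply Rmult_lt_0_compat; lra). lra.
Qed.

Lemma sm_xs {Th} (mu sig2 : Th -> R -> R) xs th : scale_meas mu sig2 xs th xs = 0.
Proof. unfold scale_meas. apply (RInt_point (V:=R_CompleteNormedModule)). Qed.

Lemma left_pt xl xr xs (P : R -> Prop) : in_dom xl xr xs -> left_end xl P -> exists x, in_dom xl xr x /\ P x.
Proof.
  intros [H1 H2] HP. destruct xl as [a| |]; simpl in *.
  - destruct HP as [eps He].
    set (y := Rmin (a + eps/2) ((a + xs)/2)).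
    assert (Hy1 : y <= a + eps/2) by apply Rmin_l.
    assert (Hy2 : y <= (a + xs)/2) by apply Rmin_r.
    assert (Hy3 : a < y) by (unfold y; apply Rmin_case; destruct eps; simpl; lra).
    exists y. split. split. simpl; lra. destruct xr; simpl in *; try tauto; lra.
    apply He. change (Rabs (y - a) < eps). apply Rabs_lt_iff. lra. exact Hy3.
  - contradiction.
  - destruct HP as [M HM].
    set (y := Rmin (M - 1) (xs - 1)).
    assert (Hy1 : y <= M - 1) by apply Rmin_l.
    assert (Hy2 : y <= xs - 1) by apply Rmin_r.
    exists y. split. split. simpl; auto. destruct xr; simpl in *; try tauto; lra.
    apply HM; lra.
Qed.

Lemma right_pt xl xr xs (P : R -> Prop) : in_dom xl xr xs -> right_end xr P -> exists x, in_dom xl xr x /\ P x.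
Proof.
  intros [H1 H2] HP. destruct xr as [a| |]; simpl in *.
  - destruct HP as [eps He].
    set (y := Rmax (a - eps/2) ((a + xs)/2)).
    assert (Hy1 : a - eps/2 <= y) by apply Rmax_l.
    assert (Hy2 : (a + xs)/2 <= y) by apply Rmax_r.
    assert (Hy3 : y < a) by (unfold y; apply Rmax_case; destruct eps; simpl; lra).
    exists y. split. split. destruct xl; simpl in *; try tauto; lra. simpl; lra.
    apply He. change (Rabs (y - a) < eps). apply Rabs_lt_iff. lra. exact Hy3.
  - destruct HP as [M HM].
    set (y := Rmax (M + 1) (xs + 1)).
    assert (Hy1 : M + 1 <= y) by apply Rmax_l.
    assert (Hy2 : xs + 1 <= y) by apply Rmax_r.
    exists y. split. split. destruct xl; simpl in *; try tauto; lra. simpl; auto.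
    apply HM; lra.
  - contradiction.
Qed.

Lemma sm_surj {Th} (mu sig2 : Th -> R -> R) xl xr xs th :
  in_dom xl xr xs -> adm_param mu sig2 xl xr xs th ->
  forall z, rng (in_dom xl xr) (scale_meas mu sig2 xs th) z.
Proof.
  intros Hxs Ha z. assert (Ha' := Ha). destruct Ha' as [_ [_ [_ [HL HR]]]].
  set (S := scale_meas mu sig2 xs th) in *.
  destruct (left_pt xl xr xs (fun x => S x < z) Hxs) as [x1 [Hx1 H1]].
  { apply (HL (fun v => v < z)). exists z. auto. }
  destruct (right_pt xl xr xs (fun x => z < S x) Hxs) as [x2 [Hx2 H2]].
  { apply (HR (fun v => z < v)). exists z. auto. }
  assert (Hi := sm_incr mu sig2 xl xr xs th Hxs Ha). fold S in Hi.
  assert (x1 < x2).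
  { destruct (Rlt_le_dec x1 x2) as [h|h]; auto. destruct (Req_dec x1 x2). subst; lra.
    assert (S x2 < S x1) by (apply Hi; auto; lra). lra. }
  destruct (ivt_seg S x1 x2 z) as [w [Hw E]].
  lra. intros t Ht. apply (sm_deriv mu sig2 xl xr xs th t) in Hxs; auto.
  eapply derive_cont; eauto. apply (dom_interval xl xr x1 x2); auto. lra.
  exists w; split; auto. apply (dom_interval xl xr x1 x2); auto.
Qed.


Lemma transf_incr xl xr V : adm_transf xl xr V -> incr_on (in_dom xl xr) V.
Proof. intros [H _]; exact H. Qed.

Lemma Ydom_rng xl xr V y : Ydom xl xr V y -> rng (in_dom xl xr) V y.
Proof. auto. Qed.

Lemma GL_D1 {Th} (mu sig2 : Th -> R -> R) xl xr xs th V y :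
  in_dom xl xr xs -> adm_param mu sig2 xl xr xs th -> adm_transf xl xr V ->
  Ydom xl xr V y ->
  is_derive (fun z => scale_meas mu sig2 xs th (Uof xl xr V z)) y
     (Derive (Uof xl xr V) y * scale_dens mu sig2 xs th (Uof xl xr V y)).
Proof.
  intros Hxs Ha [Hi [HC Hp]] Hy. unfold Uof.
  destruct (inv_on_spec _ _ _ Hy) as [HUd HUe].
  assert (H1 := inv_deriv xl xr V y Hi HC Hp Hy).
  assert (H2 := sm_deriv mu sig2 xl xr xs th _ Hxs Ha HUd).
  rewrite (is_derive_unique _ _ _ H1).
  exact (is_derive_comp _ _ _ _ _ H2 H1).
Qed.

Lemma GL_D1_loc {Th} (mu sig2 : Th -> R -> R) xl xr xs th V y :
  in_dom xl xr xs -> adm_param mu sig2 xl xr xs th -> adm_transf xl xr V ->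
  Ydom xl xr V y ->
  locally y (fun z => Derive (Uof xl xr V) z * scale_dens mu sig2 xs th (Uof xl xr V z)
     = Derive (fun z => scale_meas mu sig2 xs th (Uof xl xr V z)) z).
Proof.
  intros Hxs Ha HV Hy. destruct HV as [Hi [HC Hp]].
  apply (filter_imp (rng (in_dom xl xr) V)).
  - intros z Hz. symmetry. apply is_derive_unique. apply GL_D1; auto. split; auto.
  - apply rng_open; auto. intros t Ht; eapply C2_cont; eauto.
Qed.

Lemma GL_D2 {Th} (mu sig2 : Th -> R -> R) xl xr xs th V y :
  in_dom xl xr xs -> adm_param mu sig2 xl xr xs th -> adm_transf xl xr V ->
  Ydom xl xr V y ->
  is_derive (Derive (fun z => scale_meas mu sig2 xs th (Uof xl xr V z))) y
    (Derive (Derive (Uof xl xr V)) y * scale_dens mu sig2 xs th (Uof xl xr V y)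
     + Derive (Uof xl xr V) y * (Derive (Uof xl xr V) y *
        (- (2 * mu th (Uof xl xr V y) / sig2 th (Uof xl xr V y)) * scale_dens mu sig2 xs th (Uof xl xr V y)))).
Proof.
  intros Hxs Ha HV Hy.
  apply (is_derive_ext_loc (fun z => Derive (Uof xl xr V) z * scale_dens mu sig2 xs th (Uof xl xr V z))).
  apply GL_D1_loc; auto.
  destruct HV as [Hi [HC Hp]].
  destruct (inv_on_spec _ _ _ Hy) as [HUd HUe].
  assert (H1 := inv_deriv xl xr V y Hi HC Hp Hy).
  assert (H2 : is_derive (Derive (Uof xl xr V)) y (Derive (Derive (Uof xl xr V)) y)).
  { apply Derive_correct. eexists. apply inv_deriv2; auto. }
  assert (H3 := sd_deriv mu sig2 xl xr xs th _ Hxs Ha HUd).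
  assert (H4 := is_derive_comp _ _ _ _ _ H3 H1).
  assert (H5 := is_derive_mult _ _ _ _ _ H2 H4 (fun a b => Rmult_comm a b)).
  unfold Uof. rewrite <- (is_derive_unique _ _ _ H1) in H5.
  exact H5.
Qed.

Lemma GL {Th} (mu sig2 : Th -> R -> R) xl xr xs th V y :
  in_dom xl xr xs -> adm_param mu sig2 xl xr xs th -> adm_transf xl xr V ->
  Ydom xl xr V y ->
  let g := fun z => scale_meas mu sig2 xs th (Uof xl xr V z) in
  0 < Derive g y /\
  ex_derive (Derive g) y /\
  sigY sig2 xl xr th V y = sqrt (sigXbar2 mu sig2 xl xr xs th (g y)) / Derive g y /\
  muY mu sig2 xl xr th V y = - / 2 * (sigY sig2 xl xr th V y) ^ 2 * Derive (Derive g) y / Derive g y.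
Proof.
  intros Hxs Ha HV Hy; cbv zeta.
  assert (E1 := is_derive_unique _ _ _ (GL_D1 mu sig2 xl xr xs th V y Hxs Ha HV Hy)).
  assert (HD2 := GL_D2 mu sig2 xl xr xs th V y Hxs Ha HV Hy).
  assert (E2 := is_derive_unique _ _ _ HD2).
  assert (HV' := HV). destruct HV' as [Hi [HC Hp]].
  destruct (inv_on_spec _ _ _ Hy) as [HUd HUe].
  assert (H1 := inv_deriv xl xr V y Hi HC Hp Hy).
  set (U := inv_on (in_dom xl xr) V) in *.
  change (Uof xl xr V) with U in *.
  assert (Hu1 : 0 < 1 / Derive V (U y)).
  { specialize (Hp _ HUd). apply Rdiv_lt_0_compat; lra. }
  assert (Hs := sd_pos mu sig2 xs th (U y)).
  assert (Hsig : 0 < sig2 th (U y)) by (destruct Ha as [_ [_ [H _]]]; auto).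
  assert (E1' : Derive (fun z : R => scale_meas mu sig2 xs th (U z)) y = Derive U y * scale_dens mu sig2 xs th (U y)) by exact E1.
  rewrite (is_derive_unique _ _ _ H1) in E1'.
  assert (E2' : Derive (Derive (fun z : R => scale_meas mu sig2 xs th (U z))) y = _) by exact E2.
  clear E1 E2. rename E1' into E1. rename E2' into E2.
  split; [rewrite E1; apply Rmult_lt_0_compat; auto|].
  split; [eexists; exact HD2|].
  assert (EY : sigY sig2 xl xr th V y = sqrt (sig2 th (U y)) / (1 / Derive V (U y))).
  { unfold sigY, Uof. fold U. rewrite (is_derive_unique _ _ _ H1). reflexivity. }
  split.
  - rewrite EY. unfold sigXbar2.
    rewrite (inv_on_f _ _ _ (sm_incr mu sig2 xl xr xs th Hxs Ha) HUd).
    rewrite sqrt_mult_alt by (apply pow2_ge_0).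
    rewrite sqrt_pow2 by lra. rewrite E1. assert (HpU := Hp _ HUd). field. repeat split; lra.
  - rewrite EY. unfold muY, Uof. fold U. rewrite (is_derive_unique _ _ _ H1).
    rewrite E2, E1.
    set (u2 := Derive (Derive U) y). set (u1 := 1 / Derive V (U y)) in *.
    set (sd := scale_dens mu sig2 xs th (U y)) in *.
    assert (Hsq : sqrt (sig2 th (U y)) ^ 2 = sig2 th (U y)).
    { simpl. rewrite Rmult_1_r. apply sqrt_sqrt. lra. }
    replace ((sqrt (sig2 th (U y)) / u1) ^ 2) with (sqrt (sig2 th (U y)) ^ 2 / u1 ^ 2) by (field; lra).
    rewrite Hsq. assert (HpU := Hp _ HUd). unfold u1 in *. replace (Derive U y) with (1 / Derive V (U y)) by (symmetry; exact (is_derive_unique _ _ _ H1)). field. repeat split; lra.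
Qed.


Lemma comp_Derive (D E : R -> Prop) f g x :
  C2_on D g -> C2_on E f -> D x -> E (g x) ->
  is_derive (fun z => f (g z)) x (Derive f (g x) * Derive g x).
Proof.
  intros Hg Hf Hx He.
  eapply is_derive_eq. apply (is_derive_comp f g x).
  apply (C2_is_derive E f (g x) Hf He). apply (C2_is_derive D g x Hg Hx).
  simpl. unfold scal; simpl; unfold mult; simpl. ring.
Qed.

Lemma C2_comp (D E : R -> Prop) f g :
  (forall x, D x -> locally x D) -> (forall x, D x -> E (g x)) ->
  C2_on D g -> C2_on E f -> C2_on D (fun x => f (g x)).
Proof.
  intros Hop HDE Hg Hf.
  assert (L1 : forall x, D x -> locally x (fun z => Derive f (g z) * Derive g z = Derive (fun z => f (g z)) z)).
  { intros x Hx. apply (filter_imp D); auto. intros z Hz. symmetry. apply is_derive_unique.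
    apply (comp_Derive D E); auto. }
  assert (D2 : forall x, D x -> is_derive (fun z => Derive f (g z) * Derive g z) x
     (Derive (Derive f) (g x) * Derive g x * Derive g x + Derive f (g x) * Derive (Derive g) x)).
  { intros x Hx.
    assert (H1 := is_derive_comp (Derive f) g x _ _ (C2_is_derive2 E f (g x) Hf (HDE x Hx)) (C2_is_derive D g x Hg Hx)).
    assert (H2 := C2_is_derive2 D g x Hg Hx).
    eapply is_derive_eq. apply (is_derive_mult _ _ _ _ _ H1 H2). intros; apply Rmult_comm.
    simpl. unfold scal, plus, mult; simpl. unfold mult; simpl. ring. }
  intros x Hx. split. eexists. apply (comp_Derive D E); auto.
  split. eexists. apply (is_derive_ext_loc _ _ x _ (L1 x Hx)). apply D2; auto.
  apply (continuous_ext_loc _ (fun x => Derive (Derive f) (g x) * Derive g x * Derive g x + Derive f (g x) * Derive (Derive g) x)).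
  - apply (filter_imp D); auto. intros z Hz. symmetry. apply is_derive_unique.
    apply (is_derive_ext_loc _ _ z _ (L1 z Hz)). apply D2; auto.
  - assert (Cg : continuity_pt g x) by (apply cont_pt_of_cont; eapply C2_cont; eauto).
    assert (Cg1 : continuity_pt (Derive g) x) by (apply cont_pt_of_cont; eapply derive_cont; apply (C2_is_derive2 D g x Hg Hx)).
    assert (Cg2 : continuity_pt (Derive (Derive g)) x) by (apply cont_pt_of_cont; apply (Hg x Hx)).
    assert (Cf1 : continuity_pt (Derive f) (g x)) by (apply cont_pt_of_cont; eapply derive_cont; apply (C2_is_derive2 E f (g x) Hf (HDE x Hx))).
    assert (Cf2 : continuity_pt (Derive (Derive f)) (g x)) by (apply cont_pt_of_cont; apply (Hf (g x) (HDE x Hx))).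
    apply cont_of_cont_pt.
    apply continuity_pt_plus; apply continuity_pt_mult; try apply continuity_pt_mult; auto;
      apply (continuity_pt_comp g); auto.
Qed.

Lemma affine_C2 (D : R -> Prop) a b : C2_on D (fun t => a * t + b).
Proof.
  assert (H1 : forall t, is_derive (fun t => a * t + b) t a).
  { intros t. eapply is_derive_eq. apply (is_derive_plus (fun t => a * t) (fun _ => b)).
    eapply is_derive_eq. apply is_derive_scal. apply (is_derive_id t). reflexivity.
    apply is_derive_const. simpl. unfold plus, zero; simpl. unfold one; simpl. ring. }
  assert (E1 : forall t, Derive (fun t => a * t + b) t = a) by (intros; apply is_derive_unique, H1).
  assert (H2 : forall t, is_derive (Derive (fun t => a * t + b)) t 0).
  { intros t. apply (is_derive_ext (fun _ => a)). intros; symmetry; apply E1. eapply is_derive_eq. apply is_derive_const. reflexivity. }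
  intros x _. split. eexists; apply H1. split. eexists; apply H2.
  apply (continuous_ext (fun _ => 0)). intros; symmetry; apply is_derive_unique, H2.
  apply continuous_const.
Qed.


Lemma transf_cont xl xr V t : adm_transf xl xr V -> in_dom xl xr t -> continuous V t.
Proof. intros [_ [HC _]] Ht. eapply C2_cont; eauto. Qed.

Lemma Ydom_open xl xr V y : adm_transf xl xr V -> Ydom xl xr V y -> locally y (Ydom xl xr V).
Proof.
  intros HV Hy. apply (rng_open xl xr V y). apply (transf_incr xl xr); auto.
  intros; apply (transf_cont xl xr); auto. exact Hy.
Qed.

Lemma Ydom_interval xl xr V : adm_transf xl xr V ->
  forall a b c, Ydom xl xr V a -> Ydom xl xr V b -> a <= c <= b -> Ydom xl xr V c.
Proof.
  intros HV a b c [xa [Ha Ea]] [xb [Hb Eb]] Hc. subst a b.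
  assert (Hi := transf_incr _ _ _ HV).
  assert (xa <= xb).
  { destruct (Rle_dec xa xb); auto. assert (V xb < V xa) by (apply Hi; auto; lra). lra. }
  destruct (ivt_seg V xa xb c) as [w [Hw E]]; auto.
  intros t Ht; apply (transf_cont xl xr); auto. apply (dom_interval xl xr xa xb); auto.
  exists w; split; auto. apply (dom_interval xl xr xa xb); auto.
Qed.

Lemma sigY_pos {Th} (sig2 : Th -> R -> R) mu xl xr xs th V y :
  adm_param mu sig2 xl xr xs th -> adm_transf xl xr V -> Ydom xl xr V y ->
  0 < sigY sig2 xl xr th V y.
Proof.
  intros Ha HV Hy. assert (HV' := HV). destruct HV' as [Hi [HC Hp]].
  destruct (inv_on_spec _ _ _ Hy) as [HUd HUe].
  unfold sigY, Uof. cbv zeta.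
  rewrite (is_derive_unique _ _ _ (inv_deriv xl xr V y Hi HC Hp Hy)).
  apply Rdiv_lt_0_compat. apply sqrt_lt_R0. destruct Ha as [_ [_ [H _]]]; auto.
  specialize (Hp _ HUd). apply Rdiv_lt_0_compat; lra.
Qed.

Lemma F_nonneg {Th} (mu sig2 : Th -> R -> R) xl xr xs th v :
  in_dom xl xr xs -> adm_param mu sig2 xl xr xs th -> 0 <= sigXbar2 mu sig2 xl xr xs th v.
Proof.
  intros Hxs Ha. unfold sigXbar2. cbv zeta.
  destruct (inv_on_spec _ _ _ (sm_surj mu sig2 xl xr xs th Hxs Ha v)) as [Hd _].
  apply Rmult_le_pos. apply pow2_ge_0. left. destruct Ha as [_ [_ [H _]]]; auto.
Qed.

Lemma gD_correct {Th} (mu sig2 : Th -> R -> R) xl xr xs th V y :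
  in_dom xl xr xs -> adm_param mu sig2 xl xr xs th -> adm_transf xl xr V -> Ydom xl xr V y ->
  is_derive (fun z => scale_meas mu sig2 xs th (Uof xl xr V z)) y
     (Derive (fun z => scale_meas mu sig2 xs th (Uof xl xr V z)) y).
Proof. intros. apply Derive_correct. eexists. apply GL_D1; eauto. Qed.

Lemma gD2_correct {Th} (mu sig2 : Th -> R -> R) xl xr xs th V y :
  in_dom xl xr xs -> adm_param mu sig2 xl xr xs th -> adm_transf xl xr V -> Ydom xl xr V y ->
  is_derive (Derive (fun z => scale_meas mu sig2 xs th (Uof xl xr V z))) y
     (Derive (Derive (fun z => scale_meas mu sig2 xs th (Uof xl xr V z))) y).
Proof. intros. apply Derive_correct. eexists. apply GL_D2; eauto. Qed.

Lemma dirA {Th} (mu sig2 : Th -> R -> R) xl xr xs th V :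
  in_dom xl xr xs -> adm_param mu sig2 xl xr xs th -> adm_transf xl xr V ->
  ~ (exists (eta1 eta2 : R) (th' : Th),
        0 < eta1 /\
        adm_param mu sig2 xl xr xs th' /\
        (eta1 <> 1 \/ eta2 <> 0 \/ th' <> th) /\
        (forall xb, (exists x, in_dom xl xr x /\ scale_meas mu sig2 xs th x = xb) ->
           sigXbar2 mu sig2 xl xr xs th' xb
           = sigXbar2 mu sig2 xl xr xs th (eta1 * xb + eta2) / eta1 ^ 2)) ->
  identified mu sig2 xl xr xs th V.
Proof.
  intros Hxs Ha HV Hno th' V' Ha' HV' [HY Heq].
  set (g := fun z => scale_meas mu sig2 xs th (Uof xl xr V z)).
  set (h := fun z => scale_meas mu sig2 xs th' (Uof xl xr V' z)).
  assert (GLg : forall y, Ydom xl xr V y -> _) by (intros y Hy; exact (GL mu sig2 xl xr xs th V y Hxs Ha HV Hy)).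
  assert (GLh : forall y, Ydom xl xr V y -> _) by (intros y Hy; exact (GL mu sig2 xl xr xs th' V' y Hxs Ha' HV' (proj1 (HY y) Hy))).
  cbv zeta in GLg, GLh. fold g in GLg. fold h in GLh.
  assert (Hr : forall y, Ydom xl xr V y -> is_derive (fun z => Derive g z / Derive h z) y 0).
  { intros y Hy.
    destruct (GLg y Hy) as [g1 [_ [gs gm]]]. destruct (GLh y Hy) as [h1 [_ [hs hm]]].
    destruct (Heq y Hy) as [Em Es].
    assert (Hsp := sigY_pos sig2 mu xl xr xs th V y Ha HV Hy).
    eapply is_derive_eq. apply is_derive_div.
    apply (gD2_correct mu sig2 xl xr xs th V y); auto.
    apply (gD2_correct mu sig2 xl xr xs th' V' y); auto. apply HY; auto.
    fold h. lra. fold g h.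
    rewrite Em, hm in gm. rewrite <- Es in gm.
    assert (Hq : Derive (Derive g) y / Derive g y = Derive (Derive h) y / Derive h y).
    { apply (Rmult_eq_reg_l (- / 2 * sigY sig2 xl xr th V y ^ 2)).
      unfold Rdiv in *. rewrite <- !Rmult_assoc. symmetry. exact gm.
      apply Rmult_integral_contrapositive. split. lra. apply pow_nonzero. lra. }
    assert (Hq' : Derive (Derive g) y * Derive h y = Derive (Derive h) y * Derive g y).
    { replace (Derive (Derive g) y) with (Derive (Derive g) y / Derive g y * Derive g y) by (field; lra). rewrite Hq. field. lra. }
    match goal with |- ?a = ?b => change (@eq R a b) end. rewrite Hq'. field. lra. }
  assert (Hy0 : Ydom xl xr V (V xs)) by (exists xs; auto).
  set (eta1 := Derive g (V xs) / Derive h (V xs)).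
  assert (Heta1 : forall z, Ydom xl xr V z -> Derive g z = eta1 * Derive h z).
  { intros z Hz. unfold eta1. rewrite <- (zero_deriv_const (Ydom xl xr V) _ (Ydom_interval xl xr V HV) Hr z (V xs) Hz Hy0).
    destruct (GLh z Hz) as [h1 _]. field. lra. }
  assert (Hpos1 : 0 < eta1).
  { destruct (GLg _ Hy0) as [g1 _]. destruct (GLh _ Hy0) as [h1 _]. unfold eta1. apply Rdiv_lt_0_compat; auto. }
  assert (Hh : forall y, Ydom xl xr V y -> is_derive (fun z => g z - eta1 * h z) y 0).
  { intros y Hy. eapply is_derive_eq. apply (is_derive_minus g (fun z => eta1 * h z)).
    apply (gD_correct mu sig2 xl xr xs th V y); auto.
    apply is_derive_scal. apply (gD_correct mu sig2 xl xr xs th' V' y); auto. apply HY; auto.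
    simpl. fold g h. rewrite (Heta1 y Hy). unfold minus, plus, opp; simpl. ring. }
  set (eta2 := g (V xs) - eta1 * h (V xs)).
  assert (Hgh : forall y, Ydom xl xr V y -> g y = eta1 * h y + eta2).
  { intros y Hy. unfold eta2.
    rewrite <- (zero_deriv_const (Ydom xl xr V) _ (Ydom_interval xl xr V HV) Hh y (V xs) Hy Hy0). ring. }
  assert (Hrel : forall xb, (exists x, in_dom xl xr x /\ scale_meas mu sig2 xs th x = xb) ->
           sigXbar2 mu sig2 xl xr xs th' xb
           = sigXbar2 mu sig2 xl xr xs th (eta1 * xb + eta2) / eta1 ^ 2).
  { intros xb _.
    destruct (sm_surj mu sig2 xl xr xs th' Hxs Ha' xb) as [x' [Hx' Ex']].
    assert (Hy' : Ydom xl xr V' (V' x')) by (exists x'; auto).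
    assert (Hy : Ydom xl xr V (V' x')) by (apply HY; auto).
    assert (Ehy : h (V' x') = xb).
    { unfold h, Uof. rewrite inv_on_f; auto. apply transf_incr; auto. }
    destruct (GLg _ Hy) as [g1 [_ [gs _]]]. destruct (GLh _ Hy) as [h1 [_ [hs _]]].
    destruct (Heq _ Hy) as [_ Es].
    rewrite gs, hs, Ehy, (Heta1 _ Hy) in Es.
    rewrite (Hgh _ Hy), Ehy in Es.
    assert (Es' : sqrt (sigXbar2 mu sig2 xl xr xs th' xb) = sqrt (sigXbar2 mu sig2 xl xr xs th (eta1 * xb + eta2)) / eta1).
    { replace (sqrt (sigXbar2 mu sig2 xl xr xs th' xb)) with (sqrt (sigXbar2 mu sig2 xl xr xs th' xb) / Derive h (V' x') * Derive h (V' x')) by (field; lra).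
      rewrite <- Es. field. split; lra. }
    rewrite <- (pow2_sqrt (sigXbar2 mu sig2 xl xr xs th' xb)) by (apply F_nonneg; auto).
    rewrite Es'. rewrite <- (pow2_sqrt (sigXbar2 mu sig2 xl xr xs th (eta1 * xb + eta2))) at 2 by (apply F_nonneg; auto).
    field. lra. }
  assert (Htriv : ~ (eta1 <> 1 \/ eta2 <> 0 \/ th' <> th)).
  { intros Hne. apply Hno. exists eta1, eta2, th'. auto. }
  assert (E1 : eta1 = 1) by (apply NNPP; tauto).
  assert (E2 : eta2 = 0) by (apply NNPP; tauto).
  assert (E3 : th' = th) by (apply NNPP; tauto).
  subst th'. split; auto.
  intros x Hx.
  assert (Hy : Ydom xl xr V (V x)) by (exists x; auto).
  assert (Hy' := proj1 (HY _) Hy).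
  destruct (inv_on_spec _ _ _ Hy') as [HU'd HU'e].
  assert (EU : Uof xl xr V (V x) = x) by (apply inv_on_f; auto; apply transf_incr; auto).
  assert (Eg := Hgh _ Hy). rewrite E1, E2 in Eg. unfold g, h in Eg. rewrite EU in Eg.
  assert (Ex : x = inv_on (in_dom xl xr) V' (V x)).
  { apply (incr_inj (in_dom xl xr) (scale_meas mu sig2 xs th)); auto.
    apply sm_incr; auto. unfold Uof in Eg. lra. }
  rewrite Ex at 1. exact HU'e.
Qed.


Lemma dirB {Th} (mu sig2 : Th -> R -> R) xl xr xs th V :
  in_dom xl xr xs -> adm_param mu sig2 xl xr xs th -> adm_transf xl xr V ->
  identified mu sig2 xl xr xs th V ->
  ~ (exists (eta1 eta2 : R) (th' : Th),
        0 < eta1 /\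
        adm_param mu sig2 xl xr xs th' /\
        (eta1 <> 1 \/ eta2 <> 0 \/ th' <> th) /\
        (forall xb, (exists x, in_dom xl xr x /\ scale_meas mu sig2 xs th x = xb) ->
           sigXbar2 mu sig2 xl xr xs th' xb
           = sigXbar2 mu sig2 xl xr xs th (eta1 * xb + eta2) / eta1 ^ 2)).
Proof.
  intros Hxs Ha HV Hid [eta1 [eta2 [th' [Hpos [Ha' [Hne Hrel]]]]]].
  set (D := in_dom xl xr) in *.
  set (S := scale_meas mu sig2 xs th) in *.
  set (S' := scale_meas mu sig2 xs th').
  set (Sinv := inv_on D S).
  set (V' := fun x => V (Sinv (eta1 * S' x + eta2))).
  assert (Si : incr_on D S) by (apply sm_incr; auto).
  assert (Si' : incr_on D S') by (apply sm_incr; auto).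
  assert (SC : C2_on D S) by (apply sm_C2; auto).
  assert (SC' : C2_on D S') by (apply sm_C2; auto).
  assert (SP : forall t, D t -> 0 < Derive S t) by (apply sm_Dpos; auto).
  assert (SP' : forall t, D t -> 0 < Derive S' t) by (apply sm_Dpos; auto).
  assert (Ssurj : forall z, rng D S z) by (apply sm_surj; auto).
  assert (Ssurj' : forall z, rng D S' z) by (apply sm_surj; auto).
  assert (SinvS : forall z, D (Sinv z) /\ S (Sinv z) = z) by (intros; apply inv_on_spec, Ssurj).
  assert (SSinv : forall x, D x -> Sinv (S x) = x) by (intros; apply inv_on_f; auto).
  assert (HV0 := HV). destruct HV0 as [Vi [VC Vp]].
  assert (HV' : adm_transf xl xr V').
  { split; [|split].
    - intros x y Hx Hy Hxy. apply Vi. apply SinvS. apply SinvS.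
      assert (Hl : eta1 * S' x + eta2 < eta1 * S' y + eta2).
      { assert (S' x < S' y) by (apply Si'; auto).
        assert (eta1 * S' x < eta1 * S' y) by (apply Rmult_lt_compat_l; auto). lra. }
      set (a := eta1 * S' x + eta2) in *. set (b := eta1 * S' y + eta2) in *.
      destruct (Rtotal_order (Sinv a) (Sinv b)) as [h|[h|h]]; auto.
      + exfalso. destruct (SinvS a) as [_ Ea]. destruct (SinvS b) as [_ Eb].
        rewrite h in Ea. lra.
      + exfalso. destruct (SinvS a) as [Da Ea]. destruct (SinvS b) as [Db Eb].
        assert (S (Sinv b) < S (Sinv a)) by (apply Si; auto). lra.
    - exact (C2_comp D D V (fun x => Sinv (eta1 * S' x + eta2)) (fun x Hx => dom_open xl xr x Hx)
           (fun x _ => proj1 (SinvS _))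
           (C2_comp D (rng D S) Sinv (fun x => eta1 * S' x + eta2) (fun x Hx => dom_open xl xr x Hx)
              (fun x _ => Ssurj _)
              (C2_comp D (fun _ => True) (fun t => eta1 * t + eta2) S' (fun x Hx => dom_open xl xr x Hx)
                 (fun _ _ => I) SC' (affine_C2 _ _ _))
              (inv_C2 xl xr S Si SC SP)) VC).
    - intros x Hx.
      set (G := fun x : R => Sinv (eta1 * S' x + eta2)).
      set (H := fun x : R => eta1 * S' x + eta2).
      assert (CH : C2_on D H) by exact (C2_comp D (fun _ => True) (fun t => eta1 * t + eta2) S' (fun x Hx => dom_open xl xr x Hx)
                 (fun _ _ => I) SC' (affine_C2 _ _ _)).
      assert (CG : C2_on D G) by exact (C2_comp D (rng D S) Sinv H (fun x Hx => dom_open xl xr x Hx)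
              (fun x _ => Ssurj _) CH (inv_C2 xl xr S Si SC SP)).
      assert (E0 : Derive V' x = Derive V (G x) * Derive G x)
        by exact (is_derive_unique _ _ _ (comp_Derive D D V G x CG VC Hx (proj1 (SinvS _)))).
      assert (E1 : Derive G x = Derive Sinv (H x) * Derive H x)
        by exact (is_derive_unique _ _ _ (comp_Derive D (rng D S) Sinv H x CH (inv_C2 xl xr S Si SC SP) Hx (Ssurj _))).
      assert (E2 : Derive H x = Derive (fun t => eta1 * t + eta2) (S' x) * Derive S' x)
        by exact (is_derive_unique _ _ _ (comp_Derive D (fun _ => True) (fun t => eta1 * t + eta2) S' x
                 SC' (affine_C2 _ _ _) Hx I)).
      assert (E3 : Derive Sinv (H x) = 1 / Derive S (Sinv (H x)))
        by exact (is_derive_unique _ _ _ (inv_deriv xl xr S _ Si SC SP (Ssurj _))).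
      rewrite E0, E1, E2, E3.
      assert (E : Derive (fun t => eta1 * t + eta2) (S' x) = eta1).
      { apply is_derive_unique. eapply is_derive_eq. apply (is_derive_plus (fun t => eta1 * t) (fun _ => eta2)).
        eapply is_derive_eq. apply is_derive_scal. apply (is_derive_id (S' x)). reflexivity.
        apply is_derive_const. simpl. unfold plus, zero; simpl. unfold one; simpl. ring. }
      rewrite E.
      destruct (SinvS (H x)) as [Dz _].
      assert (h1 := Vp _ Dz). assert (h2 := SP _ Dz). assert (h3 := SP' _ Hx).
      apply Rmult_lt_0_compat; auto. apply Rmult_lt_0_compat.
      apply Rdiv_lt_0_compat; lra. apply Rmult_lt_0_compat; auto. }
  assert (HY : forall y, Ydom xl xr V y <-> Ydom xl xr V' y).
  { intros y; split.
    - intros [x [Hx <-]]. destruct (Ssurj' ((S x - eta2) / eta1)) as [x' [Hx' E']].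
      exists x'. split; auto. unfold V'. replace (eta1 * S' x' + eta2) with (S x) by (rewrite E'; field; lra).
      rewrite SSinv; auto.
    - intros [x' [Hx' <-]]. exists (Sinv (eta1 * S' x' + eta2)). split. apply SinvS. reflexivity. }
  set (g := fun z => scale_meas mu sig2 xs th (Uof xl xr V z)).
  set (h := fun z => scale_meas mu sig2 xs th' (Uof xl xr V' z)).
  assert (Key : forall z, Ydom xl xr V z -> g z = eta1 * h z + eta2).
  { intros z Hz. assert (Hz' := proj1 (HY z) Hz).
    destruct (inv_on_spec _ _ _ Hz) as [Ud Ue]. destruct (inv_on_spec _ _ _ Hz') as [U'd U'e].
    assert (U'e2 : V (Sinv (eta1 * S' (inv_on D V' z) + eta2)) = z) by exact U'e.
    assert (Ex : Sinv (eta1 * S' (inv_on D V' z) + eta2) = inv_on D V z).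
    { apply (incr_inj D V); auto. apply SinvS. rewrite U'e2. symmetry. exact Ue. }
    unfold g, h, Uof. fold D S S'. rewrite <- Ex. apply (proj2 (SinvS _)). }
  assert (Hh1 : forall z, Ydom xl xr V z -> is_derive h z (Derive g z / eta1)).
  { intros z Hz. apply (is_derive_ext_loc (fun t => / eta1 * (g t - eta2))).
    - apply (filter_imp (Ydom xl xr V)). intros t Ht. rewrite (Key t Ht). req. field. lra.
      apply Ydom_open; auto.
    - eapply is_derive_eq. apply (is_derive_scal (fun t => g t - eta2) z (/ eta1)).
      eapply is_derive_eq. apply (is_derive_minus g (fun _ => eta2)).
      apply (gD_correct mu sig2 xl xr xs th V z); auto. apply is_derive_const.
      simpl. unfold minus, plus, opp, zero; simpl. reflexivity.
      simpl. unfold minus, plus, opp, zero; simpl. unfold Rdiv. req. change (Derive (fun z : R => scale_meas mu sig2 xs th (Uof xl xr V z)) z) with (Derive g z). ring. }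
  assert (Hh1' : forall z, Ydom xl xr V z -> Derive h z = Derive g z / eta1).
  { intros z Hz. apply is_derive_unique. apply Hh1; auto. }
  assert (Hh2 : forall y, Ydom xl xr V y -> Derive (Derive h) y = Derive (Derive g) y / eta1).
  { intros y Hy.
    assert (E : Derive (Derive h) y = Derive (fun z => Derive g z / eta1) y).
    { apply Derive_ext_loc. apply (filter_imp (Ydom xl xr V)). intros t Ht. apply Hh1'; auto. apply Ydom_open; auto. }
    rewrite E. apply is_derive_unique.
    apply (is_derive_ext (fun z => / eta1 * Derive g z)). intros t; unfold Rdiv; apply Rmult_comm.
    eapply is_derive_eq. apply (is_derive_scal _ y (/ eta1)).
    apply (gD2_correct mu sig2 xl xr xs th V y); auto. req. unfold Rdiv. apply Rmult_comm. }
  assert (Hobs : obs_equiv mu sig2 xl xr th V th' V').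
  { split; auto. intros y Hy.
    assert (Hy' := proj1 (HY y) Hy).
    destruct (GL mu sig2 xl xr xs th V y Hxs Ha HV Hy) as [g1 [_ [gs gm]]].
    destruct (GL mu sig2 xl xr xs th' V' y Hxs Ha' HV' Hy') as [h1 [_ [hs hm]]].
    fold g in g1, gs, gm. fold h in h1, hs, hm.
    assert (Es : sigY sig2 xl xr th V y = sigY sig2 xl xr th' V' y).
    { rewrite gs, hs. rewrite Hrel. 2: { apply Ssurj. }
      change (scale_meas mu sig2 xs th' (Uof xl xr V' y)) with (h y). change (scale_meas mu sig2 xs th (Uof xl xr V y)) with (g y).
      rewrite <- (Key y Hy). rewrite (Hh1' y Hy).
      rewrite sqrt_div_alt by (apply pow_lt; lra). rewrite sqrt_pow2 by lra.
      field. split; lra. }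
    split; auto.
    rewrite gm, hm, <- Es, (Hh1' y Hy), (Hh2 y Hy). field. split; lra. }
  destruct (Hid th' V' Ha' HV' Hobs) as [Eth HVV].
  assert (Hlin : forall x, D x -> eta1 * S x + eta2 = S x).
  { intros x Hx. assert (E := HVV x Hx). unfold V' in E.
    assert (E2 : Sinv (eta1 * S' x + eta2) = x).
    { apply (incr_inj D V); auto. apply SinvS. }
    unfold S' in E2. rewrite Eth in E2. fold S in E2.
    rewrite <- E2 at 2. symmetry. apply SinvS. }
  assert (Ez : eta2 = 0).
  { assert (E := Hlin xs Hxs). unfold S in E. rewrite sm_xs in E. lra. }
  assert (Eo : eta1 = 1).
  { destruct (Ssurj 1) as [x1 [Hx1 E1]]. assert (E := Hlin x1 Hx1). rewrite E1 in E. lra. }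
  destruct Hne as [N|[N|N]]; auto.
Qed.


Theorem theorem5 (Th : Type) (mu sig2 : Th -> R -> R) (xl xr : Rbar) (xs : R)
  (th : Th) (V : R -> R) :
  Rbar_lt xl xr ->
  in_dom xl xr xs ->
  adm_param mu sig2 xl xr xs th ->
  adm_transf xl xr V ->
  (identified mu sig2 xl xr xs th V <->
   ~ (exists (eta1 eta2 : R) (th' : Th),
        0 < eta1 /\
        adm_param mu sig2 xl xr xs th' /\
        (eta1 <> 1 \/ eta2 <> 0 \/ th' <> th) /\
        (forall xb, (exists x, in_dom xl xr x /\ scale_meas mu sig2 xs th x = xb) ->
           sigXbar2 mu sig2 xl xr xs th' xb
           = sigXbar2 mu sig2 xl xr xs th (eta1 * xb + eta2) / eta1 ^ 2))).
Proof.
  intros _ Hxs Ha HV. split.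
  - apply dirB; auto.
  - apply dirA; auto.
Qed.
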